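(* Let $m,n\geq 1$ be integers. Then \[ \sum_{k=1}^{n}{n\brack k}\frac{(q^m/z;q)_k(z;q)_{n-k}}{(zq^{-m};q)_{m+n}(1-q^k)^{m}}z^k =-\sum_{1\leq k_m\leq k_{m-1}\leq\cdots\leq k_1\leq n}\ \prod_{i=1}^{m}\frac{q^{k_i}}{(1-zq^{k_i-i})(1-q^{k_i})}. \]
   Context: For $N\geq 0$, $(x;q)_N=(1-x)(1-xq)\cdots(1-xq^{N-1})$ (with $(x;q)_0=1$). The $q$-binomial coefficient is ${n\brack k}=\frac{(q;q)_n}{(q;q)_k(q;q)_{n-k}}$ for $0\leq k\leq n$ and $0$ otherwise. The identity is one of rational functions in $q$ and $z$. *)

(* Defs.v *)
From HB Require Import structures.
From mathcomp Require Import all_boot all_order all_algebra.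
Set Implicit Arguments. Unset Strict Implicit. Unset Printing Implicit Defensive.
Import Order.TTheory GRing.Theory Num.Theory.
Local Open Scope ring_scope.

Definition qpoch (F : fieldType) (x q : F) (N : nat) : F :=
  \prod_(i < N) (1 - x * q ^+ i).

Definition qbinom (F : fieldType) (q : F) (n k : nat) : F :=
  if (k <= n)%N then qpoch q q n / (qpoch q q k * qpoch q q (n - k)) else 0.

(* Main.v *)
Require Import Defs.
From HB Require Import structures.
From mathcomp Require Import all_boot all_order all_algebra.
From mathcomp Require Import ring zify.
Import Order.TTheory GRing.Theory Num.Theory.
Local Open Scope ring_scope.

Section Q.
Variable F : fieldType.
Variable q : F.
Hypothesis q0 : q != 0.

Lemma qp0 x : qpoch x q 0 = 1.
Proof. by rewrite /qpoch big_ord0. Qed.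

Lemma qpS x j : qpoch x q j.+1 = qpoch x q j * (1 - x * q ^+ j).
Proof. by rewrite /qpoch big_ord_recr. Qed.

Lemma qpSl x j : qpoch (x / q) q j.+1 = (1 - x / q) * qpoch x q j.
Proof.
rewrite /qpoch big_ord_recl expr0 mulr1; congr (_ * _).
apply: eq_bigr => i _; rewrite lift0 exprS; congr (1 - _); by field.
Qed.

Lemma qqS j : qpoch q q j.+1 = qpoch q q j * (1 - q ^+ j.+1).
Proof. by rewrite qpS exprS. Qed.

Variable N : nat.
Hypothesis QN : forall j, (1 <= j <= N)%N -> 1 - q ^+ j != 0.

Lemma qq_neq0 j : (j <= N)%N -> qpoch q q j != 0.
Proof.
elim: j => [|j IH] hj; first by rewrite qp0 oner_neq0.
rewrite qqS mulf_neq0 ?IH ?QN ?hj //; exact: ltnW.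
Qed.

Lemma qb_gt n k : (n < k)%N -> qbinom q n k = 0.
Proof. by rewrite /qbinom ltnNge => /negbTE ->. Qed.

Lemma qb0 n : (n <= N)%N -> qbinom q n 0 = 1.
Proof. move=> hn; rewrite /qbinom /= qp0 subn0 mul1r divff //; exact: qq_neq0. Qed.

Lemma qb_down n k : (k <= n)%N -> (n < N)%N ->
  qbinom q n k = qbinom q n.+1 k * (1 - q ^+ (n.+1 - k)) / (1 - q ^+ n.+1).
Proof.
move=> hk hn; rewrite /qbinom hk (leqW hk) subSn // qqS qqS.
have h1 := @qq_neq0 _ (ltnW hn).
have h2 : qpoch q q k != 0 by apply: qq_neq0; apply: (leq_trans hk (ltnW hn)).
have h3 : qpoch q q (n - k) != 0 by apply: qq_neq0; apply: (leq_trans (leq_subr _ _) (ltnW hn)).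
have h4 : 1 - q ^+ n.+1 != 0 by apply: QN; rewrite hn.
have h5 : 1 - q ^+ (n - k).+1 != 0.
  by apply: QN; rewrite /= (leq_ltn_trans (leq_subr _ _) hn).
field; rewrite ?h1 ?h2 ?h3 ?h4 ?h5 //.
Qed.

Lemma qb_pascal n k : (k <= n)%N -> (n < N)%N ->
  qbinom q n.+1 k.+1 = qbinom q n k.+1 + q ^+ (n - k) * qbinom q n k.
Proof.
move=> hk hn; case: (ltngtP k n) hk => // [lkn|ekn] _; last first.
  subst k; rewrite (@qb_gt n n.+1) // add0r /qbinom !leqnn !subnn !qp0 !mulr1 expr0 mul1r.
  rewrite !divff //; [exact: @qq_neq0 _ (ltnW hn) | exact: @qq_neq0 _ hn].
rewrite /qbinom ltnS lkn (ltnW lkn) subSS.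
have -> : (n - k = (n - k.+1).+1)%N by rewrite subnSK.
set i := (n - k.+1)%N.
have hin : (i.+1 + k.+1 = n.+1)%N by rewrite /i; lia.
rewrite !qqS.
have hN : (n <= N)%N by apply: ltnW.
have h1 := @qq_neq0 _ hN.
have h2 : qpoch q q k != 0 by apply: qq_neq0; apply: (leq_trans (ltnW lkn) hN).
have h3 : qpoch q q i != 0 by apply: qq_neq0; rewrite /i (leq_trans (leq_subr _ _) hN).
have h5 : 1 - q ^+ i.+1 != 0 by apply: QN; rewrite /i; lia.
have h6 : 1 - q ^+ k.+1 != 0 by apply: QN; lia.
rewrite -hin exprD.
field; rewrite ?h1 ?h2 ?h3 ?h5 ?h6 //.
Qed.


Lemma qCV a b n : (n <= N)%N ->
  \sum_(0 <= k < n.+1) qbinom q n k * qpoch a q k * qpoch b q (n - k) * b ^+ k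
  = qpoch (a * b) q n.
Proof.
elim: n => [|n IH] hn.
  by rewrite big_nat1 qb0 // !qp0 expr0 !mulr1.
have hn' : (n <= N)%N by apply: ltnW.
rewrite big_nat_recl // qb0 // subn0 qp0 expr0 mulr1 mul1r mul1r.
under eq_big_nat => k /andP[_ hk] do rewrite (@qb_pascal n k) // subSS.
rewrite (qpS (a * b)) -IH // mulr_suml.
pose U k := qbinom q n k * qpoch a q k * qpoch b q (n.+1 - k) * b ^+ k.
pose V k := q ^+ (n - k) * qbinom q n k * qpoch a q k.+1 * qpoch b q (n - k) * b ^+ k.+1.
have e1 : \sum_(0 <= k < n.+1) (qbinom q n k.+1 + q ^+ (n - k) * qbinom q n k)
     * qpoch a q k.+1 * qpoch b q (n - k) * b ^+ k.+1
   = \sum_(0 <= k < n.+1) U k.+1 + \sum_(0 <= k < n.+1) V k.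
  rewrite -big_split; apply: eq_big_nat => k _; rewrite /U /V subSS /=; ring.
have e2 : qpoch b q n.+1 + \sum_(0 <= k < n.+1) U k.+1 = \sum_(0 <= k < n.+1) U k.
  have := big_nat_recl n.+1 0 U (leq0n _) (op := +%R) (idx := 0).
  rewrite big_nat_recr //= {2}/U (@qb_gt n n.+1) // !mul0r addr0 => ->.
  by rewrite /U qb0 // qp0 subn0 expr0 !mulr1 mul1r.
rewrite e1 addrA e2 -big_split; apply: eq_big_nat => k /andP[_ hk].
rewrite /U /V subSn // qpS qpS.
have -> : q ^+ n = q ^+ (n - k) * q ^+ k by rewrite -exprD subnK.
rewrite /= exprS; ring.
Qed.


Definition Lterm m n z k := qbinom q n k * qpoch (q ^+ m / z) q k * qpoch z q (n - k)
       / (qpoch (z / q ^+ m) q (m + n) * (1 - q ^+ k) ^+ m) * z ^+ k.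
Definition L m n z := \sum_(1 <= k < n.+1) Lterm m n z k.
Definition f (i x : nat) z := q ^+ x / ((1 - z * q ^+ x / q ^+ i.+1) * (1 - q ^+ x)).
Fixpoint S m n z := match m with 0 => 1 | m'.+1 =>
  \sum_(1 <= k < n.+1) f 0 k z * S m' k (z / q) end.
Definition qnz m n z := forall j, (j < m + n)%N -> 1 - z / q ^+ m * q ^+ j != 0.

Lemma qp_neq0 x M : (forall j, (j < M)%N -> 1 - x * q ^+ j != 0) -> qpoch x q M != 0.
Proof. by move=> H; apply/prodf_neq0 => i _; apply: H. Qed.

Lemma L0 n z : z != 0 -> (n < N)%N -> qnz 0 n.+1 z -> L 0 n.+1 z = -1.
Proof.
move=> hz hn hq.
have hD : qpoch z q n.+1 != 0.
  by apply: qp_neq0 => j hj; have := hq j; rewrite add0n expr0 divr1; apply.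
have H := @qCV z^-1 z n.+1 hn; rewrite mulVf // in H.
have e : qpoch 1 q n.+1 = 0 by rewrite /qpoch big_ord_recl expr0 mulr1 subrr mul0r.
rewrite e big_nat_recl // qb0 // subn0 !qp0 expr0 !mulr1 mul1r in H.
rewrite /L big_add1 /=.
have -> : \sum_(0 <= k < n.+1) Lterm 0 n.+1 z k.+1 =
   (\sum_(0 <= i < n.+1) qbinom q n.+1 i.+1 * qpoch z^-1 q i.+1 *
       qpoch z q (n.+1 - i.+1) * z ^+ i.+1) / qpoch z q n.+1.
  rewrite mulr_suml; apply: eq_big_nat => k _.
  by rewrite /Lterm !expr0 divr1 add0n div1r mulr1 mulrAC.
have -> : \sum_(0 <= i < n.+1) qbinom q n.+1 i.+1 * qpoch z^-1 q i.+1 *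
       qpoch z q (n.+1 - i.+1) * z ^+ i.+1 = - qpoch z q n.+1.
  by apply/eqP; rewrite -subr_eq0 opprK addrC H.
by rewrite mulNr divff.
Qed.


Lemma Lterm_rec m n z k : z != 0 -> (n < N)%N -> qnz m.+1 n.+1 z -> (1 <= k <= n.+1)%N ->
  Lterm m.+1 n.+1 z k = Lterm m.+1 n z k + f 0 n.+1 z * Lterm m n.+1 (z / q) k.
Proof.
move=> hz hn hq /andP[k1 kn].
rewrite /Lterm /f.
have hqm : q ^+ m != 0 by apply: expf_neq0.
have e1 : q ^+ m / (z / q) = q ^+ m.+1 / z by rewrite exprS; field; rewrite ?hz ?q0.
have e2 : z / q / q ^+ m = z / q ^+ m.+1 by rewrite exprS; field; rewrite ?hqm ?q0.
rewrite e1 e2 (addnS m n) -(addSn m n) (addnS m.+1 n) (qpS (z / q ^+ m.+1) (m.+1 + n)).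
set w := z / q ^+ m.+1.
have hD0 : qpoch w q (m.+1 + n) != 0.
  by apply: qp_neq0 => j hj; apply: hq; rewrite addnS ltnS ltnW.
have hw : 1 - w * q ^+ (m.+1 + n) != 0 by apply: hq; rewrite addnS ltnSn.
have ew : w * q ^+ (m.+1 + n) = z * q ^+ n.
  by rewrite /w exprD; field; rewrite expf_neq0.
rewrite ew in hw *.
set D := qpoch w q (m.+1 + n).
have hD : D != 0 by [].
clearbody D.
have hk : 1 - q ^+ k != 0 by apply: QN; rewrite k1 /= (leq_trans kn hn).
have hn1 : 1 - q ^+ n.+1 != 0 by apply: QN.
rewrite expr_div_n exprS.
have e3 : z * q ^+ n.+1 / q ^+ 1 = z * q ^+ n by rewrite exprS expr1; field.
rewrite e3.
case: (ltngtP k n.+1) kn => // [lkn|ekn] _.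
  rewrite (@qb_down n k lkn hn) subSn // qpSl qpS.
  rewrite (exprSr (1 - q ^+ k) m) (exprS q (n - k)) (exprS q n).
  rewrite exprS in hn1.
  have en : q ^+ n = q ^+ (n - k) * q ^+ k by rewrite -exprD subnK.
  rewrite en in hw hn1 *.
  have hP : (1 - q ^+ k) ^+ m != 0 by apply: expf_neq0.
  have hb : q ^+ k != 0 by apply: expf_neq0.
  field; by rewrite ?hD ?hw ?hP ?hb ?hn1 ?hk ?q0 ?hz.
subst k; rewrite (@qb_gt n n.+1) // subnn !qp0 !mul0r add0r.
rewrite (exprSr (1 - q ^+ n.+1) m).
have hP : (1 - q ^+ n.+1) ^+ m != 0 by apply: expf_neq0.
have hqn : q ^+ n.+1 != 0 by apply: expf_neq0.
field; by rewrite ?hD ?hw ?hP ?hqn ?hn1 ?q0 ?hz.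
Qed.


Lemma L_rec m n z : z != 0 -> (n < N)%N -> qnz m.+1 n.+1 z ->
  L m.+1 n.+1 z = L m.+1 n z + f 0 n.+1 z * L m n.+1 (z / q).
Proof.
move=> hz hn hq.
have -> : L m.+1 n z = \sum_(1 <= k < n.+2) Lterm m.+1 n z k.
  by rewrite big_nat_recr //= /Lterm (@qb_gt n n.+1) // !mul0r addr0.
rewrite /L mulr_sumr -big_split; apply: eq_big_nat => k hk.
exact: Lterm_rec.
Qed.

Lemma qnz_le m n n' z : (n' <= n)%N -> qnz m n z -> qnz m n' z.
Proof. move=> h H j hj; apply: H; rewrite -(leq_add2l m) in h; exact: (leq_trans hj h). Qed.

Lemma qnz_shift m n z : qnz m.+1 n z -> qnz m n (z / q).
Proof.
move=> H j hj.
have -> : z / q / q ^+ m = z / q ^+ m.+1.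
  by rewrite exprS; field; rewrite ?q0 ?expf_neq0.
by apply: H; rewrite addSn ltnS ltnW.
Qed.

Lemma L_S m : forall n z, z != 0 -> (n < N)%N -> qnz m n.+1 z -> L m n.+1 z = - S m n.+1 z.
Proof.
elim: m => [|m IHm] n z hz hn hq; first by rewrite L0.
suff H : forall n', (n' <= n.+1)%N -> L m.+1 n' z = - S m.+1 n' z by apply: H.
elim => [|n' IHn] hn'.
  by rewrite /L /= !big_geq // oppr0.
have hn'N : (n' < N)%N by apply: (leq_ltn_trans _ hn).
have hq' : qnz m.+1 n'.+1 z := @qnz_le m.+1 n.+1 n'.+1 z hn' hq.
rewrite L_rec // IHn ?(ltnW hn') // IHm ?(qnz_shift hq') ?mulf_neq0 ?invr_neq0 //.
have -> : S m.+1 n'.+1 z = S m.+1 n' z + f 0 n'.+1 z * S m n'.+1 (z / q).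
  by rewrite /= big_nat_recr.
  by rewrite opprD mulrN.
exact: qnz_shift.
Qed.

Definition gcons M m (p : 'I_M.+1 * {ffun 'I_m -> 'I_M.+1}) : {ffun 'I_m.+1 -> 'I_M.+1} :=
  [ffun i => if unlift ord0 i is Some j then p.2 j else p.1].
Definition gdecons M m (k : {ffun 'I_m.+1 -> 'I_M.+1}) : 'I_M.+1 * {ffun 'I_m -> 'I_M.+1} :=
  (k ord0, [ffun j => k (lift ord0 j)]).

Lemma gcons0 M m p : @gcons M m p ord0 = p.1.
Proof. by rewrite ffunE unlift_none. Qed.
Lemma gconsS M m p j : @gcons M m p (lift ord0 j) = p.2 j.
Proof. by rewrite ffunE liftK. Qed.

Lemma gcons_bij M m : bijective (@gcons M m).
Proof.
exists (@gdecons M m).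
  case=> x k; rewrite /gdecons gcons0; congr pair; apply/ffunP => j.
  by rewrite ffunE gconsS.
move=> k; apply/ffunP => i; rewrite ffunE; case: unliftP => [j ->|->] /=; by rewrite ?ffunE.
Qed.

Definition Pk {m M : nat} (n : nat) (k : {ffun 'I_m -> 'I_M.+1}) :=
  [forall i, (0 < k i)%N && (k i <= n)%N && [forall j : 'I_m, (i <= j)%N ==> (k j <= k i)%N]].

Lemma Pk_cons M m n x k :
  Pk n (@gcons M m (x, k)) = (0 < x <= n)%N && Pk x k.
Proof.
apply/idP/idP.
  move/forallP => H.
  have := H ord0; rewrite gcons0 /= => /andP[/andP[x0 xn] /forallP Hx].
  rewrite x0 xn /=; apply/forallP => i.
  have := H (lift ord0 i); rewrite gconsS /= => /andP[/andP[ki _] /forallP Hi].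
  have := Hx (lift ord0 i); rewrite gconsS /= => kix.
  rewrite ki kix /=; apply/forallP => j; apply/implyP => hij.
  by have := Hi (lift ord0 j); rewrite gconsS !lift0 ltnS hij.
move=> /andP[/andP[x0 xn] /forallP H]; apply/forallP => i.
case: (unliftP ord0 i) => [i' ->|->].
  rewrite gconsS /=; have /andP[/andP[ki kix] /forallP Hi] := H i'.
  rewrite ki (leq_trans kix xn) /=; apply/forallP => j.
  case: (unliftP ord0 j) => [j' ->|->]; rewrite ?gconsS ?gcons0 /= ?lift0 //.
  by rewrite /bump /= !add1n ltnS; apply: Hi.
rewrite gcons0 /= x0 xn /=; apply/forallP => j.
case: (unliftP ord0 j) => [j' ->|->]; rewrite ?gconsS ?gcons0 /= ?leqnn ?implybT //.
by have /andP[/andP[_ ->] _] := H j'.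
Qed.

Definition Sf M m n z := \sum_(k : {ffun 'I_m -> 'I_M.+1} | Pk n k) \prod_(i < m) f i (k i) z.

Lemma f_shift i x z : f i.+1 x z = f i x (z / q).
Proof.
rewrite /f; congr (_ / ((1 - _) * _)); rewrite (exprS q i.+1).
field; by rewrite ?q0 ?expf_neq0.
Qed.

Lemma Sf_S M m : forall n z, (n <= M)%N -> Sf M m n z = S m n z.
Proof.
elim: m => [|m IHm] n z hn.
  rewrite /Sf /= (eq_bigl xpredT); last by move=> k; apply/forallP => -[].
  under eq_bigr do rewrite big_ord0.
  by rewrite sumr_const card_ffun !card_ord expn0.
rewrite /Sf (reindex (@gcons M m)) /=; last exact: onW_bij (gcons_bij M m).
rewrite (eq_bigl (fun p : 'I_M.+1 * {ffun 'I_m -> 'I_M.+1} => (0 < p.1 <= n)%N && Pk p.1 p.2)); last first.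
  by case=> x k; rewrite Pk_cons.
rewrite (eq_bigr (fun p : 'I_M.+1 * {ffun 'I_m -> 'I_M.+1} => f 0 p.1 z * \prod_(i < m) f i (p.2 i) (z / q))); last first.
  case=> x k _; rewrite big_ord_recl gcons0; congr (_ * _).
  by apply: eq_bigr => i _; rewrite gconsS lift0 f_shift.
rewrite -(pair_big_dep (fun x : 'I_M.+1 => (0 < x <= n)%N) (fun x k => Pk x k)
   (fun x k => f 0 x z * \prod_(i < m) f i (k i) (z / q))) /=.
transitivity (\sum_(x : 'I_M.+1 | (0 < x <= n)%N) f 0 x z * S m x (z / q)).
  apply: eq_bigr => x /andP[_ hx].
  by rewrite -mulr_sumr -IHm ?(leq_trans hx hn).
rewrite -(big_mkord (fun x => 0 < x <= n)%N (fun x => f 0 x z * S m x (z / q))).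
rewrite (big_nat_widen 1 n.+1 M.+1) ?ltnS // big_ltn_cond //=.
rewrite big_nat_cond [RHS]big_nat_cond; apply: eq_bigl => i.
by case: i => //= i; rewrite ltnS.
Qed.

End Q.

Theorem theorem1p2 (F : fieldType) (m n : nat) (q z : F) :
  (0 < m)%N -> (0 < n)%N ->
  q != 0 -> z != 0 ->
  (forall k : nat, (1 <= k <= n)%N -> 1 - q ^+ k != 0) ->
  qpoch (z / q ^+ m) q (m + n) != 0 ->
  \sum_(1 <= k < n.+1)
     qbinom q n k * qpoch (q ^+ m / z) q k * qpoch z q (n - k)
       / (qpoch (z / q ^+ m) q (m + n) * (1 - q ^+ k) ^+ m) * z ^+ k
  = - \sum_(k : {ffun 'I_m -> 'I_n.+1} |
              [forall i, 0 < (k i : nat)]%N &&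
              [forall i : 'I_m, forall j : 'I_m, (i <= j)%N ==> (k j <= k i)%N])
        \prod_(i < m)
           (q ^+ (k i) / ((1 - z * q ^+ (k i) / q ^+ i.+1) * (1 - q ^+ (k i)))).
Proof.
move=> hm hn hq hz QN hD.
have hqnz : @qnz F q m n z.
  by move: hD => /prodf_neq0 H j hj; exact: (H (Ordinal hj) isT).
rewrite (eq_bigl (fun k => Pk n k)); last first.
  move=> k; apply/andP/forallP.
    case=> /forallP H1 /forallP H2 i; rewrite H1 -ltnS ltn_ord /=.
    exact: H2.
  move=> H; split; apply/forallP => i; case/andP: (H i) => /andP[H1 _] H2 //.
change (@L F q m n z = - @Sf F q n m n z).
rewrite (@Sf_S F q hq) //.
clear hD; case: n hn QN hqnz => // n _ QN hqnz.
exact: (@L_S F q hq n.+1 QN m n z hz (ltnSn n) hqnz).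
Qed.
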